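(* The Steiner–Plücker configuration is isomorphic to the incidence structure $\mathcal S$ whose points are the 20 four-element subsets of $\{0,1,\dots,6\}$ containing $0$, whose lines are the 15 three-element subsets of $\{0,1,\dots,6\}$ containing $0$, and in which a point is incident with a line iff the line's subset is contained in the point's subset. (Geometrically: these are the intersection points of the quadruples and the intersection lines of the triples, each containing $H_0$, of seven hyperplanes $H_0,\dots,H_6$ in general position in projective 4-space, which after a suitable projection to the plane form the Steiner–Plücker configuration.)
   Context: Steiner–Plücker configuration $(20_3,15_4)$: consider three triangles $A_iB_iC_i$ ($i=1,2,3$) in the projective plane, perspective from a common point $O$ (so $O,A_1,A_2,A_3$ are collinear, likewise for the $B$'s and the $C$'s). For each pair $i<j$, corresponding sides meet in three points $A_iB_i\cap A_jB_j$, $B_iC_i\cap B_jC_j$, $C_iA_i\cap C_jA_j$, which lie on the axis of perspectivity $a_{ij}$; the three axes $a_{12},a_{13},a_{23}$ pass through a common point $Z$. Combinatorially, the configuration has the 20 points $O$, the 9 vertices, the 9 side-intersection points and $Z$, and the 15 lines: the 3 lines through $O$ and corresponding vertices, the 9 sides, and the 3 axes, with the incidences just described (each line contains 4 of the points, each point lies on 3 of the lines). *)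

(* Defs.v *)
From mathcomp Require Import all_boot.
Set Implicit Arguments. Unset Strict Implicit. Unset Printing Implicit Defensive.

(* ---------- Combinatorial Steiner–Plücker configuration (20_3,15_4) ----------
   Triangles are indexed by i : 'I_3 (the paper's 1,2,3).
   Vertex types v : 'I_3 : 0 = A, 1 = B, 2 = C.
   Side types  s : 'I_3 : 0 = AB, 1 = BC, 2 = CA; side type s has vertex
   types s and s+1 (mod 3).
   Pairs {i,j} (i<>j) of triangles are 2-element subsets of 'I_3. *)

Inductive SP_raw_point :=
  | SP_O                                (* centre of perspectivity O *)
  | SP_V of 'I_3 & 'I_3                 (* SP_V v i : vertex of type v of triangle i *)
  | SP_S of 'I_3 & {set 'I_3}           (* SP_S s {i,j} : side_s(i) ∩ side_s(j) *)
  | SP_Z.                               (* common point Z of the three axes *)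

Inductive SP_raw_line :=
  | SP_LO of 'I_3                       (* line through O and the vertices of type v *)
  | SP_LSide of 'I_3 & 'I_3             (* SP_LSide s i : side of type s of triangle i *)
  | SP_LAxis of {set 'I_3}.             (* axis of perspectivity a_{ij} *)

Definition SP_point_ok (P : SP_raw_point) : bool :=
  if P is SP_S _ p then #|p| == 2 else true.
Definition SP_line_ok (L : SP_raw_line) : bool :=
  if L is SP_LAxis p then #|p| == 2 else true.

Definition SP_point := {P : SP_raw_point | SP_point_ok P}.
Definition SP_line := {L : SP_raw_line | SP_line_ok L}.

Definition vert_on_side (v s : 'I_3) : bool :=
  (v == s) || (nat_of_ord v == (nat_of_ord s).+1 %% 3).

Definition SP_raw_inc (P : SP_raw_point) (L : SP_raw_line) : bool :=
  match P, L with
  | SP_O, SP_LO _ => true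
  | SP_V v i, SP_LO v' => v == v'
  | SP_V v i, SP_LSide s i' => (i == i') && vert_on_side v s
  | SP_S s p, SP_LSide s' i => (s == s') && (i \in p)
  | SP_S s p, SP_LAxis p' => p == p'
  | SP_Z, SP_LAxis _ => true
  | _, _ => false
  end.

Definition SP_inc (P : SP_point) (L : SP_line) : bool :=
  SP_raw_inc (sval P) (sval L).

Definition S_point := {A : {set 'I_7} | (ord0 \in A) && (#|A| == 4)}.
Definition S_line := {B : {set 'I_7} | (ord0 \in B) && (#|B| == 3)}.

Definition S_inc (A : S_point) (B : S_line) : bool := sval B \subset sval A.

(* Main.v *)
Require Import Defs.
From mathcomp Require Import all_boot.
Set Implicit Arguments. Unset Strict Implicit. Unset Printing Implicit Defensive.

Definition o30 : 'I_3 := @Ordinal 3 0 isT.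
Definition o31 : 'I_3 := @Ordinal 3 1 isT.
Definition o32 : 'I_3 := @Ordinal 3 2 isT.
Definition q0 : 'I_7 := @Ordinal 7 0 isT.
Definition q1 : 'I_7 := @Ordinal 7 1 isT.
Definition q2 : 'I_7 := @Ordinal 7 2 isT.
Definition q3 : 'I_7 := @Ordinal 7 3 isT.
Definition q4 : 'I_7 := @Ordinal 7 4 isT.
Definition q5 : 'I_7 := @Ordinal 7 5 isT.
Definition q6 : 'I_7 := @Ordinal 7 6 isT.

Lemma ord3_cases (i : 'I_3) : i = o30 \/ i = o31 \/ i = o32.
Proof.
case: i => [[|[|[|//]]] h]; [left|right;left|right;right]; exact/val_inj.
Qed.

Lemma ord7_cases (i : 'I_7) :
  i = q0 \/ i = q1 \/ i = q2 \/ i = q3 \/ i = q4 \/ i = q5 \/ i = q6.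
Proof.
case: i => [[|[|[|[|[|[|[|//]]]]]]] h].
all: by do ?[ (left; apply/val_inj; done) | right ]; apply/val_inj.
Qed.

Lemma card3 (p : {set 'I_3}) :
  #|p| = ((o30 \in p) : nat) + (o31 \in p) + (o32 \in p).
Proof.
rewrite -sum1_card big_mkcond /= !big_ord_recl big_ord0 /=.
have -> : lift ord0 (lift ord0 (ord0 : 'I_1)) = o32 by apply/val_inj.
have -> : lift ord0 (ord0 : 'I_2) = o31 by apply/val_inj.
have -> : (ord0 : 'I_3) = o30 by apply/val_inj.
by case: (o30 \in p); case: (o31 \in p); case: (o32 \in p).
Qed.

Lemma card7 (p : {set 'I_7}) :
  #|p| = ((q0 \in p) : nat) + (q1 \in p) + (q2 \in p) + (q3 \in p)
         + (q4 \in p) + (q5 \in p) + (q6 \in p).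
Proof.
rewrite -sum1_card big_mkcond /= !big_ord_recl big_ord0 /=.
have -> : lift ord0 (lift ord0 (lift ord0 (lift ord0 (lift ord0 (lift ord0 (ord0 : 'I_1)))))) = q6
  by apply/val_inj.
have -> : lift ord0 (lift ord0 (lift ord0 (lift ord0 (lift ord0 (ord0 : 'I_2))))) = q5
  by apply/val_inj.
have -> : lift ord0 (lift ord0 (lift ord0 (lift ord0 (ord0 : 'I_3)))) = q4
  by apply/val_inj.
have -> : lift ord0 (lift ord0 (lift ord0 (ord0 : 'I_4))) = q3 by apply/val_inj.
have -> : lift ord0 (lift ord0 (ord0 : 'I_5)) = q2 by apply/val_inj.
have -> : lift ord0 (ord0 : 'I_6) = q1 by apply/val_inj.
have -> : (ord0 : 'I_7) = q0 by apply/val_inj.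
by case: (q0 \in p); case: (q1 \in p); case: (q2 \in p); case: (q3 \in p);
   case: (q4 \in p); case: (q5 \in p); case: (q6 \in p).
Qed.

Lemma subset7 (A B : {set 'I_7}) :
  (A \subset B) = all (fun x => (x \in A) ==> (x \in B)) [:: q0; q1; q2; q3; q4; q5; q6].
Proof.
apply/subsetP/allP.
- by move=> h x _; apply/implyP/h.
- move=> h x hx; apply: (implyP (h x _)) hx.
  by case: (ord7_cases x) => [->|[->|[->|[->|[->|[->|->]]]]]]; rewrite !inE eqxx ?orbT.
Qed.

Lemma eq3 (p p' : {set 'I_3}) :
  (p == p') = [&& (o30 \in p) == (o30 \in p'), (o31 \in p) == (o31 \in p') &
                  (o32 \in p) == (o32 \in p')].
Proof.
apply/eqP/idP.
- by move=> ->; rewrite !eqxx.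
- move=> /and3P [/eqP h0 /eqP h1 /eqP h2]; apply/setP => x.
  by case: (ord3_cases x) => [->|[->|->]].
Qed.

Definition pmem (p : {set 'I_3}) (n : nat) : bool :=
  ((n == 4) && (o30 \in p)) || ((n == 5) && (o31 \in p)) || ((n == 6) && (o32 \in p)).

Definition memP (P : SP_raw_point) (n : nat) : bool :=
  match P with
  | SP_O => n <= 3
  | SP_V v i => (n == 0) || ((1 <= n <= 3) && (n != v.+1)) || (n == i + 4)
  | SP_S s p => (n == 0) || (n == ((s + 2) %% 3).+1) || pmem p n
  | SP_Z => (n == 0) || (4 <= n)
  end.

Definition memL (L : SP_raw_line) (n : nat) : bool :=
  match L with
  | SP_LO v => (n == 0) || ((1 <= n <= 3) && (n != v.+1))
  | SP_LSide s i => (n == 0) || (n == ((s + 2) %% 3).+1) || (n == i + 4)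
  | SP_LAxis p => (n == 0) || pmem p n
  end.

Definition setP7 (P : SP_raw_point) : {set 'I_7} := [set x : 'I_7 | memP P x].
Definition setL7 (L : SP_raw_line) : {set 'I_7} := [set x : 'I_7 | memL L x].

Lemma setP7_ok (P : SP_point) : (ord0 \in setP7 (sval P)) && (#|setP7 (sval P)| == 4).
Proof.
case: P => [[|v i|s p|] /= h]; rewrite card7 /setP7 !inE /=.
- by [].
- by case: (ord3_cases v) => [->|[->|->]]; case: (ord3_cases i) => [->|[->|->]].
- move: h; rewrite /= card3 /pmem.
  by case: (ord3_cases s) => [->|[->|->]];
    case: (o30 \in p); case: (o31 \in p); case: (o32 \in p).
- by [].
Qed.

Lemma setL7_ok (L : SP_line) : (ord0 \in setL7 (sval L)) && (#|setL7 (sval L)| == 3).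
Proof.
case: L => [[v|s i|p] /= h]; rewrite card7 /setL7 !inE /=.
- by case: (ord3_cases v) => [->|[->|->]].
- by case: (ord3_cases s) => [->|[->|->]]; case: (ord3_cases i) => [->|[->|->]].
- move: h; rewrite /= card3 /pmem.
  by case: (o30 \in p); case: (o31 \in p); case: (o32 \in p).
Qed.

Definition fP (P : SP_point) : S_point := exist (fun A : {set 'I_7} => (ord0 \in A) && (#|A| == 4)) (setP7 (sval P)) (setP7_ok P).
Definition fL (L : SP_line) : S_line := exist (fun A : {set 'I_7} => (ord0 \in A) && (#|A| == 3)) (setL7 (sval L)) (setL7_ok L).

Definition bset (A : {set 'I_7}) : {set 'I_3} :=
  [set k | ((k == o30) && (q4 \in A)) || ((k == o31) && (q5 \in A))
           || ((k == o32) && (q6 \in A))].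

Definition missa (A : {set 'I_7}) : 'I_3 :=
  if q1 \notin A then o30 else if q2 \notin A then o31 else o32.
Definition presa (A : {set 'I_7}) : 'I_3 :=
  if q1 \in A then o31 else if q2 \in A then o32 else o30.
Definition theb (A : {set 'I_7}) : 'I_3 :=
  if q4 \in A then o30 else if q5 \in A then o31 else o32.
Definition na (A : {set 'I_7}) : nat := ((q1 \in A) : nat) + (q2 \in A) + (q3 \in A).

Definition rawP (A : {set 'I_7}) : SP_raw_point :=
  if na A == 3 then SP_O else if na A == 0 then SP_Z
  else if na A == 2 then SP_V (missa A) (theb A)
  else SP_S (presa A) (bset A).

Definition rawL (A : {set 'I_7}) : SP_raw_line :=
  if na A == 2 then SP_LO (missa A)
  else if na A == 1 then SP_LSide (presa A) (theb A)
  else SP_LAxis (bset A).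

Definition dP : SP_point := exist _ SP_O isT.
Definition dL : SP_line := exist _ (SP_LO o30) isT.

Definition gP (A : S_point) : SP_point := insubd dP (rawP (sval A)).
Definition gL (A : S_line) : SP_line := insubd dL (rawL (sval A)).

Lemma fPK : cancel fP gP.
Proof.
move=> P; apply/val_inj; rewrite /gP val_insubd /=.
case: P => [[|v i|s p|] /= h]; rewrite /rawP /na /missa /presa /theb /setP7 !inE /=.
- by [].
- by case: (ord3_cases v) => [->|[->|->]]; case: (ord3_cases i) => [->|[->|->]].
- have -> : bset [set x : 'I_7 | memP (SP_S s p) x] = p.
    apply/setP => k; rewrite !inE /= /pmem.
    by case: (ord3_cases k) => [->|[->|->]]; case: (ord3_cases s) => [->|[->|->]];
      case: (o30 \in p); case: (o31 \in p); case: (o32 \in p).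
  by case: (ord3_cases s) => [->|[->|->]]; rewrite /= h.
- by [].
Qed.

Lemma gPK : cancel gP fP.
Proof.
move=> [A hA]; apply/val_inj; rewrite /= /gP val_insubd /=.
move: hA; rewrite card7.
have -> : (ord0 : 'I_7) = q0 by apply/val_inj.
move=> hA; apply/setP => x; rewrite /setP7 inE.
rewrite /rawP /na /missa /presa /theb /bset.
case: (ord7_cases x) => [->|[->|[->|[->|[->|[->|->]]]]]];
move: hA;
case: (q0 \in A) => //; case: (q1 \in A); case: (q2 \in A); case: (q3 \in A);
  case: (q4 \in A); case: (q5 \in A); case: (q6 \in A) => //= _;
  rewrite ?card3 !inE /= /pmem ?inE //.
Qed.

Lemma fLK : cancel fL gL.
Proof.
move=> L; apply/val_inj; rewrite /gL val_insubd /=.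
case: L => [[v|s i|p] /= h]; rewrite /rawL /na /missa /presa /theb /setL7 !inE /=.
- by case: (ord3_cases v) => [->|[->|->]].
- by case: (ord3_cases s) => [->|[->|->]]; case: (ord3_cases i) => [->|[->|->]].
- have -> : bset [set x : 'I_7 | memL (SP_LAxis p) x] = p.
    apply/setP => k; rewrite !inE /= /pmem.
    by case: (ord3_cases k) => [->|[->|->]];
      case: (o30 \in p); case: (o31 \in p); case: (o32 \in p).
  by rewrite /= h.
Qed.

Lemma gLK : cancel gL fL.
Proof.
move=> [A hA]; apply/val_inj; rewrite /= /gL val_insubd /=.
move: hA; rewrite card7.
have -> : (ord0 : 'I_7) = q0 by apply/val_inj.
move=> hA; apply/setP => x; rewrite /setL7 inE.
rewrite /rawL /na /missa /presa /theb /bset.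
case: (ord7_cases x) => [->|[->|[->|[->|[->|[->|->]]]]]];
move: hA;
case: (q0 \in A) => //; case: (q1 \in A); case: (q2 \in A); case: (q3 \in A);
  case: (q4 \in A); case: (q5 \in A); case: (q6 \in A) => //= _;
  rewrite ?card3 !inE /= /pmem ?inE //.
Qed.

Theorem lemma4p4 :
  exists (f : SP_point -> S_point) (g : SP_line -> S_line),
    [/\ bijective f, bijective g &
        forall (P : SP_point) (L : SP_line), SP_inc P L = S_inc (f P) (g L)].
Proof.
exists fP, fL; split; [exact: Bijective fPK gPK | exact: Bijective fLK gLK |].
move=> [P hP] [L hL]; rewrite /S_inc /SP_inc /= /setP7 /setL7 subset7 /= !inE /=.
case: P hP => [|v i|s p|] /= hP; case: L hL => [v'|s' i'|p'] /= hL; rewrite /pmem.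
all: try (case: (ord3_cases v) => [->|[->|->]]); try (case: (ord3_cases i) => [->|[->|->]]);
     try (case: (ord3_cases s) => [->|[->|->]]); try (case: (ord3_cases v') => [->|[->|->]]);
     try (case: (ord3_cases i') => [->|[->|->]]); try (case: (ord3_cases s') => [->|[->|->]]).
all: rewrite ?eq3; move: hP hL; rewrite ?card3 //=.
all: try (case: (o30 \in p); case: (o31 \in p); case: (o32 \in p));
     try (case: (o30 \in p'); case: (o31 \in p'); case: (o32 \in p')); by [].
Qed.
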